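(* The maps $\Psi,\Phi:\mathfrak{S}_n\to\mathfrak{S}_n$ are inverses of each other. Moreover, for every $\pi\in\mathfrak{S}_n$, $$\operatorname{Odd}(\pi)=\operatorname{Redge}(\Psi(\pi))\quad\text{and}\quad \operatorname{Redge}(\pi)=\operatorname{Odd}(\Phi(\pi)).$$
   Context: For $\pi\in\mathfrak{S}_n$ (a word $a_1\cdots a_n$) and $x\in[n]$, the $x$-factorization is $\pi=w_1w_2xw_4w_5$ where $w_2$ (resp. $w_4$) is the maximal contiguous subword immediately to the left (resp. right) of $x$ all of whose letters are smaller than $x$; set $\varphi_x(\pi)=w_1w_4xw_2w_5$. These $\varphi_x$ are commuting involutions. The decreasing binary tree of a word $w$ with distinct positive integer letters: empty if $w$ is empty; otherwise write $w=LmR$ with $m$ the greatest letter, the root is labeled $m$, its left subtree is the tree of $L$ and its right subtree the tree of $R$. For $x\in[n]$, $r_\pi(x)$ is the number of right edges on the path from the root to $x$ in the decreasing binary tree of $\pi$. $\operatorname{Odd}(\pi)=\{x\in[n]:r_\pi(x)\text{ odd}\}$, and $\operatorname{Redge}(\pi)$ is the set of vertices that are the lower ends of right edges in that tree. Define $\Psi(\pi)=\prod_{x\in\operatorname{Odd}(\pi)}\varphi_x(\pi)$ and $\Phi(\pi)=\prod_{x\in\operatorname{Redge}(\pi)}\varphi_x(\pi)$. *)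

(* Defs.v *)
From mathcomp Require Import all_boot.
Set Implicit Arguments. Unset Strict Implicit. Unset Printing Implicit Defensive.

(* Permutations of [n] = {1..n} are represented as words (seq nat) that are
   rearrangements of iota 1 n. *)
Definition is_perm_word (n : nat) (w : seq nat) : bool := perm_eq w (iota 1 n).

Definition small_prefix (x : nat) (s : seq nat) : seq nat :=
  take (find (fun y => x <= y) s) s.

(* x-factorization  w = w1 w2 x w4 w5  and  phi_x(w) = w1 w4 x w2 w5. *)
Definition phi (x : nat) (w : seq nat) : seq nat :=
  let i := index x w in
  let L := take i w in
  let R := drop i.+1 w in
  let w2 := rev (small_prefix x (rev L)) in
  let w1 := take (size L - size w2) L in
  let w4 := small_prefix x R in
  let w5 := drop (size w4) R in
  w1 ++ w4 ++ x :: w2 ++ w5.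

Definition phi_prod (s : seq nat) (w : seq nat) : seq nat :=
  foldr phi w s.

Inductive btree := Leaf | Node of btree & nat & btree.

Fixpoint dbt_fuel (k : nat) (w : seq nat) : btree :=
  match k with
  | 0 => Leaf
  | k'.+1 =>
    if w is [::] then Leaf else
    let m := foldr maxn 0 w in
    let i := index m w in
    Node (dbt_fuel k' (take i w)) m (dbt_fuel k' (drop i.+1 w))
  end.

(* Decreasing binary tree of a word (the fuel size w is sufficient). *)
Definition dbt (w : seq nat) : btree := dbt_fuel (size w) w.

Fixpoint tlabels (t : btree) : seq nat :=
  match t with Leaf => [::] | Node l m r => tlabels l ++ m :: tlabels r end.

Fixpoint rcount (t : btree) (x : nat) : nat :=
  match t with
  | Leaf => 0
  | Node l m r =>
    if m == x then 0
    else if x \in tlabels l then rcount l x else (rcount r x).+1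
  end.

Fixpoint redges (t : btree) : seq nat :=
  match t with
  | Leaf => [::]
  | Node l m r =>
    redges l ++ (if r is Node _ c _ then [:: c] else [::]) ++ redges r
  end.

Definition r_pi (w : seq nat) (x : nat) : nat := rcount (dbt w) x.

Definition Odd (w : seq nat) : seq nat := [seq x <- w | odd (r_pi w x)].

Definition Redge (w : seq nat) : seq nat := redges (dbt w).

Definition Psi (w : seq nat) : seq nat := phi_prod (Odd w) w.
Definition Phi (w : seq nat) : seq nat := phi_prod (Redge w) w.

(* Main.v *)
Require Import Defs.
From mathcomp Require Import all_boot.
From mathcomp Require Import zify.
Set Implicit Arguments. Unset Strict Implicit. Unset Printing Implicit Defensive.

Fixpoint tswap (P : pred nat) (t : btree) : btree :=
  match t with
  | Leaf => Leaf
  | Node l m r => if P m then Node (tswap P r) m (tswap P l)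
                  else Node (tswap P l) m (tswap P r)
  end.

Fixpoint heap (t : btree) : bool :=
  match t with
  | Leaf => true
  | Node l m r => [&& all (fun y => y < m) (tlabels l),
                      all (fun y => y < m) (tlabels r), heap l & heap r]
  end.

Definition rt (t : btree) : option nat := if t is Node _ m _ then Some m else None.

Lemma tswap_perm P t : perm_eq (tlabels (tswap P t)) (tlabels t).
Proof.
elim: t => [|l IHl m r IHr] //=.
apply/permP => a; move/permP: IHl => /(_ a) IHl; move/permP: IHr => /(_ a) IHr.
case: (P m) => /=; rewrite !count_cat /= IHl IHr //.
move: (count a (tlabels l)) (count a (tlabels r)) (nat_of_bool (a m)) => x y z; lia.
Qed.

Lemma tswap_mem P t : tlabels (tswap P t) =i tlabels t.
Proof. by move=> y; rewrite (perm_mem (tswap_perm P t)). Qed.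

Lemma tswap_uniq P t : uniq (tlabels (tswap P t)) = uniq (tlabels t).
Proof. exact: perm_uniq (tswap_perm P t). Qed.

Lemma tswap_size P t : size (tlabels (tswap P t)) = size (tlabels t).
Proof. exact: perm_size (tswap_perm P t). Qed.

Lemma tswap_heap P t : heap t -> heap (tswap P t).
Proof.
elim: t => [|l IHl m r IHr] //= /and4P [al ar hl hr].
by case: (P m) => /=; rewrite !(eq_all_r (tswap_mem P _)) al ar (IHl hl) (IHr hr).
Qed.

Lemma tswap_rt P t : rt (tswap P t) = rt t.
Proof. by case: t => //= l m r; case: (P m). Qed.

Lemma eq_tswap P Q t : {in tlabels t, P =1 Q} -> tswap P t = tswap Q t.
Proof.
elim: t => [|l IHl m r IHr] //= H.
rewrite IHl ?IHr ?H ?mem_cat ?inE ?eqxx ?orbT // => y Hy; apply: H;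
  rewrite mem_cat inE Hy ?orbT //.
Qed.

Lemma tswap_id P t : {in tlabels t, forall y, P y = false} -> tswap P t = t.
Proof.
elim: t => [|l IHl m r IHr] //= H.
rewrite H ?mem_cat ?inE ?eqxx ?orbT // IHl ?IHr // => y Hy; apply: H;
  rewrite mem_cat inE Hy ?orbT //.
Qed.

Lemma tswap_comp P Q t :
  tswap Q (tswap P t) = tswap (fun y => P y (+) Q y) t.
Proof.
elim: t => [|l IHl m r IHr] //=.
by case: (P m) => /=; case: (Q m) => /=; rewrite IHl IHr.
Qed.

Lemma tswap_inv P Q t : {in tlabels t, P =1 Q} -> tswap Q (tswap P t) = t.
Proof.
move=> H; rewrite tswap_comp tswap_id // => y /H ->; exact: addbb.
Qed.

Lemma sp_all x s : all (fun y => y < x) s -> small_prefix x s = s.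
Proof.
elim: s => //= y s IH /andP[hy hs]; rewrite /small_prefix /= leqNgt hy /=.
congr (_ :: _); exact: IH.
Qed.

Lemma sp_stop x u y v : x <= y -> small_prefix x (u ++ y :: v) = small_prefix x u.
Proof.
move=> hxy; rewrite /small_prefix find_cat; case: ifP => H.
  by rewrite take_cat -has_find H.
by rewrite /= hxy addn0 take_size_cat // hasNfind ?H // take_size.
Qed.

Lemma sp_size x s : size (small_prefix x s) <= size s.
Proof. by rewrite /small_prefix size_take; case: ifP => // /ltnW. Qed.

Lemma phi_catR x u y v : x \in u -> x <= y ->
  phi x (u ++ y :: v) = phi x u ++ y :: v.
Proof.
move=> xu xy; rewrite /phi index_cat xu.
have iu : index x u < size u by rewrite index_mem.
rewrite take_cat iu.
have -> : drop (index x u).+1 (u ++ y :: v) = drop (index x u).+1 u ++ y :: v.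
  rewrite drop_cat; case: ltnP => // h.
  have -> : (index x u).+1 - size u = 0 by lia.
  by rewrite drop0 drop_oversize.
rewrite sp_stop //.
rewrite drop_cat; case: ltnP => h.
  by rewrite -!catA /= -!catA.
have e : size (small_prefix x (drop (index x u).+1 u)) = size (drop (index x u).+1 u).
  by apply/eqP; rewrite eqn_leq sp_size h.
by rewrite e subnn drop_size /= -!catA /= -!catA.
Qed.

Lemma take_pre (v : seq nat) y T k : k <= size T ->
  take (size (v ++ y :: T) - k) (v ++ y :: T) = v ++ y :: take (size T - k) T.
Proof.
move=> hk; rewrite take_cat size_cat /=.
have -> : (size v + (size T).+1 - k < size v) = false by apply/negbTE; lia.
have -> : size v + (size T).+1 - k - size v = (size T - k).+1 by lia.
by [].
Qed.

Lemma phi_catL x u y v : x \in u -> x \notin v -> x != y -> x <= y ->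
  phi x (v ++ y :: u) = v ++ y :: phi x u.
Proof.
move=> xu xv xny xy; rewrite /phi index_cat (negbTE xv) /= eq_sym (negbTE xny).
have iu : index x u < size u by rewrite index_mem.
have -> : take (size v + (index x u).+1) (v ++ y :: u) = v ++ y :: take (index x u) u.
  rewrite take_cat.
  have -> : (size v + (index x u).+1 < size v) = false by apply/negbTE; lia.
  by rewrite addKn.
have -> : drop (size v + (index x u).+1).+1 (v ++ y :: u) = drop (index x u).+1 u.
  rewrite drop_cat.
  have -> : ((size v + (index x u).+1).+1 < size v) = false by apply/negbTE; lia.
  by have -> : (size v + (index x u).+1).+1 - size v = (index x u).+2 by lia.
have hs := sp_size x (rev (take (index x u) u)); rewrite size_rev in hs.
rewrite rev_pivot sp_stop // take_pre; rewrite ?size_rev //.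
by rewrite -catA.
Qed.

Lemma phi_root m u v : all (fun y => y < m) u -> all (fun y => y < m) v ->
  phi m (u ++ m :: v) = v ++ m :: u.
Proof.
move=> hu hv.
have mu : m \notin u by apply/negP => /(allP hu); rewrite ltnn.
rewrite /phi index_cat (negbTE mu) /= eqxx addn0 take_size_cat //.
have -> : drop (size u).+1 (u ++ m :: v) = v.
  by rewrite -cat_rcons drop_size_cat // size_rcons.
rewrite sp_all ?all_rev // revK subnn take0 sp_all //.
by rewrite drop_size cats0.
Qed.

Lemma uniq_split (u v : seq nat) m :
  uniq (u ++ m :: v) ->
  [/\ uniq u, uniq v, m \notin u, m \notin v & forall y, y \in u -> y \notin v].
Proof.
rewrite cat_uniq /= => /and3P[uu /norP[mu hn] /andP[mv uv]].
split => // y yu; apply/negP => yv; move/hasPn: hn => /(_ y yv); by rewrite yu.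
Qed.

Lemma phi_tree x t : heap t -> uniq (tlabels t) -> x \in tlabels t ->
  phi x (tlabels t) = tlabels (tswap (fun y => y == x) t).
Proof.
elim: t => [|l IHl m r IHr] //= /and4P[al ar hl hr] U.
case/uniq_split: (U) => ul ur ml mr lr.
rewrite mem_cat inE => /or3P[xl|/eqP xm|xr].
- have xlt : x < m by apply: (allP al).
  rewrite (_ : (m == x) = false); last by apply/negbTE; rewrite neq_ltn xlt orbT.
  rewrite phi_catR ?IHl ?(ltnW xlt) //= (tswap_id (t := r)) // => y yr.
  by apply/negbTE; apply: contraNneq (lr _ xl) => <-.
- subst x; rewrite eqxx phi_root // !tswap_id //= => y yt; apply/negbTE.
  + by rewrite neq_ltn (allP al).
  + by rewrite neq_ltn (allP ar).
- have xlt : x < m by apply: (allP ar).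
  have xl : x \notin tlabels l by apply: contraTN xr => /lr.
  rewrite (_ : (m == x) = false); last by apply/negbTE; rewrite neq_ltn xlt orbT.
  rewrite phi_catL ?IHr ?(ltnW xlt) ?neq_ltn ?xlt //= (tswap_id (t := l)) // => y yl.
  by apply/negbTE; apply: contraNneq xl => <-.
Qed.

Lemma phi_prod_tree s t : heap t -> uniq (tlabels t) -> all (mem (tlabels t)) s ->
  phi_prod s (tlabels t) = tlabels (tswap (fun y => odd (count_mem y s)) t).
Proof.
move=> ht ut; elim: s => [|x s IH] /=.
  by move=> _; rewrite tswap_id.
case/andP => xt st; rewrite IH // phi_tree ?tswap_heap ?tswap_uniq ?tswap_mem //.
rewrite tswap_comp; congr tlabels; apply: eq_tswap => y _ /=.
by rewrite oddD eq_sym addbC; case: (x == y).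
Qed.

Lemma maxf_ge y s : y \in s -> y <= foldr maxn 0 s.
Proof.
elim: s => //= a s IH; rewrite inE => /orP[/eqP->|/IH h]; first exact: leq_maxl.
exact: leq_trans h (leq_maxr _ _).
Qed.

Lemma maxf_le m s : all (fun y => y <= m) s -> foldr maxn 0 s <= m.
Proof. by elim: s => //= a s IH /andP[h1 h2]; rewrite geq_max h1 IH. Qed.

Lemma maxf_mem s : s != [::] -> foldr maxn 0 s \in s.
Proof.
elim: s => //= a s IH _; case: (altP (s =P [::])) => [->|sn].
  by rewrite /= maxn0 inE.
rewrite inE; case: (leqP a (foldr maxn 0 s)) => h.
  by rewrite IH ?orbT.
by rewrite eqxx.
Qed.

Lemma maxf_split m u v : all (fun y => y < m) u -> all (fun y => y < m) v ->
  foldr maxn 0 (u ++ m :: v) = m.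
Proof.
move=> hu hv; apply/eqP; rewrite eqn_leq maxf_ge ?mem_cat ?inE ?eqxx ?orbT // andbT.
apply: maxf_le; rewrite all_cat /= leqnn /=.
by apply/andP; split; apply/allP => y hy; apply: ltnW; [apply: (allP hu) | apply: (allP hv)].
Qed.

Lemma dbt_fuelS k w : w != [::] -> dbt_fuel k.+1 w =
  Node (dbt_fuel k (take (index (foldr maxn 0 w) w) w)) (foldr maxn 0 w)
       (dbt_fuel k (drop (index (foldr maxn 0 w) w).+1 w)).
Proof. by case: w. Qed.

Lemma dbt_tree k t : heap t -> size (tlabels t) <= k -> dbt_fuel k (tlabels t) = t.
Proof.
elim: k t => [|k IH] [|l m r] //.
  by rewrite /= size_cat /=; lia.
rewrite [heap _]/= [tlabels _]/=.
case/and4P => al ar hl hr hs.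
have ne : tlabels l ++ m :: tlabels r != [::] by case: (tlabels l).
rewrite dbt_fuelS //.
have ml : m \notin tlabels l by apply/negP => /(allP al); rewrite ltnn.
rewrite maxf_split // index_cat (negbTE ml) /= eqxx addn0 take_size_cat //.
rewrite -cat_rcons drop_size_cat ?size_rcons //.
move: hs; rewrite size_cat /= -/(tlabels l) -/(tlabels r) => hs.
by rewrite !IH //; lia.
Qed.

Lemma dbt_word k w : uniq w -> size w <= k ->
  tlabels (dbt_fuel k w) = w /\ heap (dbt_fuel k w).
Proof.
elim: k w => [|k IH] w Uw Sw; first by case: w Uw Sw.
case: (altP (w =P [::])) => [->|wn] //.
rewrite dbt_fuelS //.
set m := foldr maxn 0 w; set i := index m w.
have mw : m \in w by apply: maxf_mem.
have iw : i < size w by rewrite index_mem.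
have Ew : take i w ++ m :: drop i.+1 w = w.
  by have := cat_take_drop i w; rewrite (drop_nth 0 iw) nth_index.
have Uw' := Uw; rewrite -Ew in Uw'; case/uniq_split: Uw' => ut ud mt md _.
have st : size (take i w) <= k by rewrite size_takel ?(ltnW iw) //; lia.
have sd : size (drop i.+1 w) <= k by rewrite size_drop; lia.
have [E1 H1] := IH _ ut st; have [E2 H2] := IH _ ud sd.
split; first by rewrite /= E1 E2.
rewrite /= E1 E2 H1 H2 !andbT; apply/andP; split; apply/allP => y hy.
  rewrite ltn_neqAle maxf_ge; last by rewrite -Ew mem_cat hy.
  by rewrite andbT; apply: contraNneq mt => <-.
rewrite ltn_neqAle maxf_ge; last by rewrite -Ew mem_cat inE hy !orbT.
by rewrite andbT; apply: contraNneq md => <-.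
Qed.

Lemma redges_node l m r y :
  (y \in redges (Node l m r)) = [|| y \in redges l, rt r == Some y | y \in redges r].
Proof.
rewrite /= !mem_cat; case: r => //= rl c rr; rewrite inE.
by congr (_ || (_ || _)); apply/eqP/eqP => [->|[->]].
Qed.

Lemma some_eq (a b : nat) : (Some a == Some b) = (a == b).
Proof. by apply/eqP/eqP => [[->]|->]. Qed.

Lemma redges_count t y :
  count_mem y (redges t) + (rt t == Some y) <= count_mem y (tlabels t).
Proof.
elim: t => [|l IHl m r IHr] //=.
rewrite !count_cat /=.
have e : count_mem y (if r is Node _ c _ then [:: c] else [::]) = (rt r == Some y).
  by case: r {IHr} => //= rl c rr; rewrite addn0 some_eq.
rewrite e some_eq.
move: IHl IHr; case: (rt l == Some y) => /=; case: (rt r == Some y) => /=;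
  case: (m == y) => /=; lia.
Qed.

Lemma mem_count (y : nat) s : (y \in s) = (0 < count_mem y s).
Proof. by rewrite -has_count has_pred1. Qed.

Lemma redges_sub t y : y \in redges t -> y \in tlabels t.
Proof. rewrite !mem_count => h; have := redges_count t y; lia. Qed.

Lemma redges_rt t y : uniq (tlabels t) -> y \in redges t -> rt t != Some y.
Proof.
move=> U; rewrite mem_count => h; have := redges_count t y.
have := count_uniq_mem y U; case: (y \in tlabels t) => /= ->.
  by case: (rt t == Some y) => //= H; move: H; rewrite addn1 ltnS leqNgt h.
by move: h; case: (count_mem y (redges t)).
Qed.

Lemma redges_odd t y : uniq (tlabels t) -> odd (count_mem y (redges t)) = (y \in redges t).
Proof.
move=> U; have := redges_count t y; have := count_uniq_mem y U.
rewrite (mem_count y (redges t)); case: (y \in tlabels t) => /= ->.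
  by case: (count_mem y (redges t)) => [|[|k]].
by case: (count_mem y (redges t)).
Qed.

Lemma rt_mem t y : rt t = Some y -> y \in tlabels t.
Proof. by case: t => //= l m r [->]; rewrite mem_cat inE eqxx orbT. Qed.

Lemma rt_nmem t y : y \notin tlabels t -> (rt t == Some y) = false.
Proof. by move=> h; apply/negbTE; apply: contraNneq h => /rt_mem. Qed.

Lemma rt_rcount t y : rt t = Some y -> rcount t y = 0.
Proof. by case: t => //= l m r [->]; rewrite eqxx. Qed.

Lemma rc_l l m r z : z \in tlabels l -> m \notin tlabels l ->
  rcount (Node l m r) z = rcount l z.
Proof.
move=> zl ml /=; rewrite zl; case: eqP => // e; by rewrite e zl in ml.
Qed.

Lemma rc_r l m r z : z \notin tlabels l -> z != m ->
  rcount (Node l m r) z = (rcount r z).+1.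
Proof. by move=> zl zm /=; rewrite eq_sym (negbTE zm) (negbTE zl). Qed.

Lemma claim1 t P b : uniq (tlabels t) ->
  {in tlabels t, forall y, P y = b (+) odd (rcount t y)} ->
  forall y, y \in tlabels t ->
  (y \in redges (tswap P t)) = (rt t != Some y) && (b (+) odd (rcount t y)).
Proof.
elim: t b => [|l IHl m r IHr] b // U HP.
have U' : uniq (tlabels l ++ m :: tlabels r) := U.
case/uniq_split: U' => ul ur ml mr lr.
have inT z : (z \in tlabels (Node l m r)) = (z \in tlabels l ++ m :: tlabels r) by [].
have mT : m \in tlabels (Node l m r) by rewrite inT mem_cat inE eqxx orbT.
have Pm : P m = b by rewrite (HP m mT) /= eqxx addbF.
have HPl : {in tlabels l, forall y, P y = b (+) odd (rcount l y)}.
  move=> z zl; have zT : z \in tlabels (Node l m r) by rewrite inT mem_cat zl.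
  by rewrite (HP z zT) (rc_l r zl ml).
have HPr : {in tlabels r, forall y, P y = (~~ b) (+) odd (rcount r y)}.
  move=> z zr; have zl : z \notin tlabels l by apply: contraTN zr => /lr.
  have zm : z != m by apply: contraNneq mr => <-.
  have zT : z \in tlabels (Node l m r) by rewrite inT mem_cat inE zr !orbT.
  by rewrite (HP z zT) (rc_r r zl zm) /= addbN addNb.
have nl z : z \notin tlabels l -> z \notin redges (tswap P l).
  by apply: contraNN => /redges_sub; rewrite tswap_mem.
have nr z : z \notin tlabels r -> z \notin redges (tswap P r).
  by apply: contraNN => /redges_sub; rewrite tswap_mem.
have eT : tswap P (Node l m r) = if b then Node (tswap P r) m (tswap P l)
                                  else Node (tswap P l) m (tswap P r).
  by rewrite /= Pm.
move=> y; rewrite inT mem_cat inE eT => /or3P[yl|/eqP ym|yr].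
- have yr : y \notin tlabels r by apply: lr.
  have ym : y != m by apply: contraNneq ml => <-.
  rewrite (rc_l r yl ml) [rt _]/= some_eq eq_sym (negbTE ym) /=.
  have := IHl _ ul HPl y yl.
  destruct b => E; rewrite redges_node tswap_rt E ?(rt_nmem yr)
     ?(negbTE (nr _ yr)) ?(negbTE (nl _ yr)) /=;
  case: (rt l =P Some y) => [/rt_rcount -> //|_] /=; rewrite ?orbF //.
- subst y; rewrite [rt (Node _ _ _)]/= eqxx /=.
  by destruct b; rewrite redges_node !tswap_rt !rt_nmem // (negbTE (nl _ ml)) (negbTE (nr _ mr)).
- have yl : y \notin tlabels l by apply: contraTN yr => /lr.
  have ym : y != m by apply: contraNneq mr => <-.
  rewrite (rc_r r yl ym) [rt _]/= some_eq eq_sym (negbTE ym) /=.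
  have := IHr _ ur HPr y yr.
  destruct b => E; rewrite redges_node tswap_rt E ?(rt_nmem yl)
     ?(negbTE (nr _ yl)) ?(negbTE (nl _ yl)) /=;
  case: (rt r =P Some y) => [/rt_rcount -> //|_] /=; rewrite ?orbF ?negbK //.
Qed.

Lemma claim3 t P b : uniq (tlabels t) ->
  {in tlabels t, forall y, P y = (y \in redges t) || (b && (rt t == Some y))} ->
  forall y, y \in tlabels t -> odd (rcount (tswap P t) y) = P y (+) b.
Proof.
elim: t b => [|l IHl m r IHr] b // U HP.
have U' : uniq (tlabels l ++ m :: tlabels r) := U.
case/uniq_split: U' => ul ur ml mr lr.
have inT z : (z \in tlabels (Node l m r)) = (z \in tlabels l ++ m :: tlabels r) by [].
have mT : m \in tlabels (Node l m r) by rewrite inT mem_cat inE eqxx orbT.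
have mred : m \notin redges (Node l m r).
  by apply: contraL (eqxx (Some m)) => /(redges_rt U).
have Pm : P m = b by rewrite (HP m mT) (negbTE mred) [rt _]/= eqxx andbT.
have nrl z : z \notin tlabels l -> z \notin redges l by apply: contraNN => /redges_sub.
have nrr z : z \notin tlabels r -> z \notin redges r by apply: contraNN => /redges_sub.
have HPl : {in tlabels l, forall y, P y = (y \in redges l) || (false && (rt l == Some y))}.
  move=> z zl; have zT : z \in tlabels (Node l m r) by rewrite inT mem_cat zl.
  have zr := lr _ zl; have zm : z != m by apply: contraNneq ml => <-.
  rewrite (HP z zT) redges_node (rt_nmem zr) (negbTE (nrr _ zr)) [rt _]/= some_eq.
  by rewrite eq_sym (negbTE zm) andbF !orbF.
have HPr : {in tlabels r, forall y, P y = (y \in redges r) || (true && (rt r == Some y))}.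
  move=> z zr; have zl : z \notin tlabels l by apply: contraTN zr => /lr.
  have zm : z != m by apply: contraNneq mr => <-.
  have zT : z \in tlabels (Node l m r) by rewrite inT mem_cat inE zr !orbT.
  rewrite (HP z zT) redges_node (negbTE (nrl _ zl)) [rt _]/=.
  have -> : (rt (Node l m r) == Some z) = false by rewrite /= some_eq eq_sym (negbTE zm).
  by rewrite andbF orbF /= orbC.
have eT : tswap P (Node l m r) = if b then Node (tswap P r) m (tswap P l)
                                  else Node (tswap P l) m (tswap P r).
  by rewrite /= Pm.
move=> y; rewrite inT mem_cat inE eT => /or3P[yl|/eqP ym|yr].
- have yr : y \notin tlabels r by apply: lr.
  have ym : y != m by apply: contraNneq ml => <-.
  have E := IHl _ ul HPl y yl.
  destruct b.
    rewrite rc_r ?tswap_mem //= E.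
    by case: (P y).
  by rewrite rc_l ?tswap_mem.
- subst y; rewrite Pm addbb.
  by destruct b; rewrite /= eqxx.
- have yl : y \notin tlabels l by apply: contraTN yr => /lr.
  have ym : y != m by apply: contraNneq mr => <-.
  have E := IHr _ ur HPr y yr.
  destruct b.
    by rewrite rc_l ?tswap_mem.
  rewrite rc_r ?tswap_mem //= E.
  by case: (P y).
Qed.

Lemma count_filter_uniq (s : seq nat) (p : pred nat) y : uniq s -> y \in s ->
  count_mem y [seq x <- s | p x] = p y.
Proof.
move=> U ys; rewrite count_filter.
have -> : count (predI (pred1 y) p) s = count (fun x => (x == y) && p y) s.
  by apply: eq_count => x /=; case: eqP => // ->.
case: (p y).
  by under eq_count do rewrite andbT; rewrite count_uniq_mem // ys.
by under eq_count do rewrite andbF; rewrite count_pred0.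
Qed.

Lemma dbt_labels t : heap t -> dbt (tlabels t) = t.
Proof. by move=> h; rewrite /dbt dbt_tree. Qed.

Unset Implicit Arguments.

Theorem theorem7p1 (n : nat) (w : seq nat) :
  is_perm_word n w ->
  [/\ is_perm_word n (Psi w), is_perm_word n (Phi w),
      Phi (Psi w) = w, Psi (Phi w) = w &
      (Odd w =i Redge (Psi w)) /\ (Redge w =i Odd (Phi w))].
Proof.
rewrite /is_perm_word => Pw.
have Uw : uniq w by rewrite (perm_uniq Pw) iota_uniq.
have [Et Ht] := dbt_word Uw (leqnn (size w)).
rewrite -/(dbt w) in Et Ht.
set t := dbt w in Et Ht.
have Ut : uniq (tlabels t) by rewrite Et.
have Pt : perm_eq (tlabels t) (iota 1 n) by rewrite Et.
have rpi : r_pi w =1 rcount t by [].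
set P1 := fun y => odd (count_mem y (Odd w)).
have hP1 : {in tlabels t, forall y, P1 y = false (+) odd (rcount t y)}.
  move=> y yt; have yw : y \in w by rewrite -Et.
  rewrite /P1 /Odd count_filter_uniq // /r_pi -/t.
  by case: (odd (rcount t y)).
have sub1 : all (mem (tlabels t)) (Odd w).
  by apply/allP => x; rewrite /Odd mem_filter Et => /andP[].
have EPsi : Psi w = tlabels (tswap P1 t).
  by rewrite /Psi -{2}Et phi_prod_tree.
set t1 := tswap P1 t in EPsi.
have Ht1 : heap t1 by apply: tswap_heap.
have Ut1 : uniq (tlabels t1) by rewrite tswap_uniq.
have RPsi : Redge (Psi w) = redges t1 by rewrite /Redge EPsi dbt_labels.
have C1 := claim1 Ut hP1.
have red1 y : (y \in redges t1) = (y \in tlabels t) && odd (rcount t y).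
  case yt: (y \in tlabels t).
    rewrite /t1 C1 //=; case: (rt t =P Some y) => [/rt_rcount -> //|] /=.
    by [].
  by rewrite /=; apply/negbTE; apply: contraFN yt => /redges_sub; rewrite tswap_mem.
set P3 := fun y => odd (count_mem y (redges t)).
have hP3 : {in tlabels t, forall y, P3 y = (y \in redges t) || (false && (rt t == Some y))}.
  by move=> y _; rewrite /P3 redges_odd // orbF.
have sub3 : all (mem (tlabels t)) (redges t) by apply/allP => x /redges_sub.
have EPhi : Phi w = tlabels (tswap P3 t).
  by rewrite /Phi /Redge -/t -[X in phi_prod _ X]Et phi_prod_tree.
set t3 := tswap P3 t in EPhi.
have Ht3 : heap t3 by apply: tswap_heap.
have Ut3 : uniq (tlabels t3) by rewrite tswap_uniq.
have C3 := claim3 Ut hP3.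
have odd3 y : (y \in Odd (Phi w)) = (y \in redges t).
  rewrite /Odd /r_pi EPhi dbt_labels // mem_filter tswap_mem.
  case yt: (y \in tlabels t).
    by rewrite andbT /t3 C3 // addbF /P3 redges_odd.
  by rewrite andbF; apply/esym/negbTE; apply: contraFN yt => /redges_sub.
split.
- by rewrite EPsi (perm_trans (tswap_perm _ _) Pt).
- by rewrite EPhi (perm_trans (tswap_perm _ _) Pt).
- rewrite /Phi RPsi EPsi phi_prod_tree //; last by apply/allP => x /redges_sub.
  rewrite /t1 tswap_inv // => y yt.
  rewrite redges_odd // red1 yt hP1 //.
- rewrite /Psi.
  have sub4 : all (mem (tlabels t3)) (Odd (Phi w)).
    by apply/allP => x; rewrite odd3 => /redges_sub; rewrite -topredE /= /t3 tswap_mem.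
  rewrite {2}EPhi phi_prod_tree //.
  rewrite /t3 tswap_inv // => y yt.
  rewrite /P3 redges_odd //.
  rewrite -odd3 /Odd EPhi count_filter_uniq //; last by rewrite tswap_mem.
  rewrite mem_filter /t3 tswap_mem yt andbT.
  by case: (odd (r_pi (tlabels (tswap P3 t)) y)).
- split => y.
    by rewrite RPsi red1 /Odd mem_filter Et andbC.
  by rewrite odd3.
Qed.
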